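(* Let $m,n,s,k,c$ be positive integers with $s$ or $k$ odd, and let $\Gamma$ be an abelian group of order $nkc$ having exactly one involution. Then there is no $\mathrm{MRS}_\Gamma(m,n;s,k;c)$.
   Context: For positive integers $m,n,s,k,c$ and an abelian group $\Gamma$ of order $nkc$, an $\mathrm{MRS}_\Gamma(m,n;s,k;c)$ is a set of $c$ partially filled $m\times n$ arrays (some cells may be empty) with entries in $\Gamma$ such that: every element of $\Gamma$ appears exactly once and in a unique array; in every array each row contains exactly $s$ filled cells and each column contains exactly $k$ filled cells; and there exist $\omega,\delta\in\Gamma$ such that in every array the sum of the entries of each row is $\omega$ and the sum of the entries of each column is $\delta$. An involution is an element of order $2$. *)

(* Defs.v *)
From HB Require Import structures.
From mathcomp Require Import all_boot all_order all_algebra.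
Set Implicit Arguments. Unset Strict Implicit. Unset Printing Implicit Defensive.
Import GRing.Theory.
Local Open Scope ring_scope.

(* An abelian group Gamma is modelled as a finite Z-module (additive notation).
   A family of c partially filled m x n arrays with entries in G is a function
   A : 'I_c -> 'I_m -> 'I_n -> option G  (None = empty cell). *)

Definition arrays (G : Type) (m n c : nat) := 'I_c -> 'I_m -> 'I_n -> option G.

Definition cellv (G : zmodType) (x : option G) : G := odflt 0 x.

Definition is_MRS (G : finZmodType) (m n s k c : nat) (A : arrays G m n c) : Prop :=
  [/\
      forall g : G, #|[set t : 'I_c * 'I_m * 'I_n | A t.1.1 t.1.2 t.2 == Some g]| = 1%N,
      forall (a : 'I_c) (i : 'I_m), #|[set j : 'I_n | A a i j != None]| = s,
      forall (a : 'I_c) (j : 'I_n), #|[set i : 'I_m | A a i j != None]| = k &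
      exists omega delta : G,
        (forall (a : 'I_c) (i : 'I_m), \sum_(j < n) cellv (A a i j) = omega) /\
        (forall (a : 'I_c) (j : 'I_n), \sum_(i < m) cellv (A a i j) = delta)].

Definition involutions (G : finZmodType) : {set G} :=
  [set x : G | (x != 0) && (x + x == 0)].

(* Main.v *)
Require Import Defs.
From HB Require Import structures.
From mathcomp Require Import all_boot all_order all_algebra all_fingroup all_solvable.
Import GRing.Theory.
Set Implicit Arguments. Unset Strict Implicit.
Local Open Scope ring_scope.

Lemma mul_card0 (G : finZmodType) (x : G) : x *+ #|G| = 0.
Proof.
by rewrite -FinRing.zmodXgE -cardsT (@expg_cardG _ [set: G]%G) ?inE // FinRing.zmod1gE.
Qed.

Lemma sum_pairs0 (G : finZmodType) : \sum_(x : G | x != -x) x = 0.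
Proof.
pose r (x : G) : nat := enum_rank x.
rewrite (bigID (fun x => r x < r (-x))%N) /=.
rewrite [X in _ + X](reindex_inj (@oppr_inj G)) /=.
have -> : \sum_(x | (- x != - - x) && ~~ (r (- x) < r (- - x))%N) - x
          = \sum_(x | (x != - x) && (r x < r (- x))%N) - x.
  apply: eq_bigl => x; rewrite opprK eq_sym.
  case: eqP => //= hx.
  rewrite -leqNgt leq_eqVlt; case: eqP => //= he.
  exfalso; apply: hx; apply: enum_rank_inj; apply: val_inj; exact: he.
by rewrite sumrN addrN.
Qed.

Lemma sumG_neq0 (G : finZmodType) : #|involutions G| = 1%N -> \sum_(x : G) x != 0.
Proof.
move=> /eqP /cards1P [i Hi].
have : i \in involutions G by rewrite Hi set11.
rewrite inE => /andP [i0 ii].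
rewrite (bigID (fun x : G => x == -x)) /= sum_pairs0 addr0.
rewrite (bigD1 (0:G)) /=; last by rewrite oppr0.
rewrite (bigD1 i) /=; last by rewrite i0 -addr_eq0 ii.
rewrite big1 ?addr0 ?add0r //.
move=> x /andP [/andP [xx x0] xi].
have : x \in involutions G by rewrite inE x0 addr_eq0.
by rewrite Hi inE (negbTE xi).
Qed.

Lemma cellv_sum (G : finZmodType) (x : option G) :
  cellv x = \sum_(g : G) (if x == Some g then g else 0).
Proof.
case: x => [h|] /=; last by rewrite big1.
rewrite (bigD1 h) //= eqxx big1 ?addr0 // => g hg.
by case: eqP => // [[e]]; rewrite e eqxx in hg.
Qed.

Lemma card_set_sum (T : finType) (P : pred T) : #|[set x | P x]| = (\sum_x (P x : nat))%N.
Proof.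
rewrite -sum1_card big_mkcond /=; apply: eq_bigr => x _; rewrite inE; by case: (P x).
Qed.

Lemma oddS0 (G : finZmodType) (S : G) (t : nat) : S *+ 2 = 0 -> odd t -> S *+ t = S.
Proof.
move=> S2 ht; rewrite -[t]odd_double_half ht mulrnDr -mul2n mulrnA S2 mul0rn addr0.
by [].
Qed.

Lemma sum_ord_const (V : zmodType) m (x:V) : \sum_(i < m) x = x *+ m.
Proof. by rewrite sumr_const card_ord. Qed.

Theorem corollary3p7 (G : finZmodType) (m n s k c : nat) :
  (0 < m)%N -> (0 < n)%N -> (0 < s)%N -> (0 < k)%N -> (0 < c)%N ->
  odd s || odd k ->
  #|G| = (n * k * c)%N ->
  #|involutions G| = 1%N ->
  ~ exists A : arrays G m n c, is_MRS s k A.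
Proof.
move=> _ _ _ _ _ hodd hG hinv [A [h1 h2 h3 [om [de [hr hc]]]]].
have Sneq := sumG_neq0 hinv.
set S := \sum_(x : G) x in Sneq.
have SN : S = - S by rewrite /S {1}(reindex_inj (@oppr_inj G)) /= sumrN.
have S2 : S *+ 2 = 0 by rewrite mulr2n {1}SN addNr.
have E : S = \sum_(a < c) \sum_(i < m) \sum_(j < n) cellv (A a i j).
  rewrite (pair_bigA _ (fun a i => \sum_(j < n) cellv (A a i j))) /=.
  rewrite (pair_bigA _ (fun p j => cellv (A p.1 p.2 j))) /=.
  rewrite [RHS](eq_bigr _ (fun t _ => cellv_sum _)).
  rewrite exchange_big /S; apply: eq_bigr => g _.
  rewrite -big_mkcond /= -[LHS]mulr1n -(h1 g).
  transitivity (\sum_(t in [set t : 'I_c * 'I_m * 'I_n | A t.1.1 t.1.2 t.2 == Some g]) g).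
    by rewrite sumr_const.
  by apply: eq_bigl => t; rewrite inE.
have Er : S = om *+ (c * m).
  rewrite E; under eq_bigr do under eq_bigr do rewrite hr.
  by rewrite (eq_bigr _ (fun a _ => sum_ord_const _ _)) sum_ord_const -mulrnA mulnC.
have Ec : S = de *+ (c * n).
  rewrite E; under eq_bigr do rewrite exchange_big /=.
  under eq_bigr do under eq_bigr do rewrite hc.
  by rewrite (eq_bigr _ (fun a _ => sum_ord_const _ _)) sum_ord_const -mulrnA mulnC.
have cnt : (c * m * s = c * n * k)%N.
  have C1 : (\sum_(a < c) \sum_(i < m) \sum_(j < n) ((A a i j != None) : nat) = c * m * s)%N.
    under eq_bigr do under eq_bigr do rewrite -card_set_sum h2.
    by under eq_bigr do rewrite sum_nat_const card_ord; rewrite sum_nat_const card_ord -mulnA.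
  have C2 : (\sum_(a < c) \sum_(i < m) \sum_(j < n) ((A a i j != None) : nat) = c * n * k)%N.
    under eq_bigr do rewrite exchange_big /=.
    under eq_bigr do under eq_bigr do rewrite -card_set_sum h3.
    by under eq_bigr do rewrite sum_nat_const card_ord; rewrite sum_nat_const card_ord -mulnA.
  by rewrite -C1 -C2.
apply/negP: Sneq; rewrite negbK; apply/eqP.
case/orP: hodd => ho.
  rewrite -(oddS0 S2 ho) {1}Er -mulrnA cnt.
  by rewrite (_ : (c * n * k = #|G|)%N) ?mul_card0 // hG [RHS]mulnC mulnA.
rewrite -(oddS0 S2 ho) {1}Ec -mulrnA.
by rewrite (_ : (c * n * k = #|G|)%N) ?mul_card0 // hG [RHS]mulnC mulnA.
Qed.
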